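(* Let $2<p<4$, assume (V), fix $k\in\mathbb{N}$ and $\mathbf{r}_k\in\Lambda_k$. Let $(u_1,\dots,u_{k+1})\in\mathbf{H}_k$ with $u_i\neq0$ and $$\frac{\big(\int_{B_i}|u_i|^p\,dx\big)^{2/p}}{\|u_i\|_i^2}\ \ge\ (2S_p)^{-1}\qquad\text{for } i=1,\dots,k+1.$$ Set $$\widehat b:=\frac{p-2}{4-p}\Big(1+k\,2^{\frac{2}{p-2}}\Big(\frac{2}{4-p}\Big)^{\frac{2}{p-2}}\Big)^{-1}\Big(\frac{4-p}{2}\Big)^{\frac{2}{p-2}}(2S_p)^{-\frac{p}{p-2}},\qquad b_*:=\min\Big\{\frac{p-2}{4-p}\Big(\frac{4-p}{2}\Big)^{\frac{2}{p-2}}(2S_p)^{-\frac{p}{p-2}},\ \widehat b\Big\}.$$ Then for each $b\in(0,b_* )$ there is a unique $(k+1)$-tuple $(t_1,\dots,t_{k+1})\in(0,\infty)^{k+1}$ such that $(t_1u_1,\dots,t_{k+1}u_{k+1})\in N_k^-$.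
   Context: Condition (V): $V$ is continuous, radial, and $\inf_{\mathbb{R}^3}V=V_0>0$. $\mathcal{H}$ is the space of radial $H^1(\mathbb{R}^3)$ functions with finite norm $\|u\|_{\mathcal{H}}^2=\int(|\nabla u|^2+V u^2)dx$, and $S_q:=\inf_{u\in\mathcal{H}\setminus\{0\}}\|u\|_{\mathcal{H}}^2/|u|_q^2$ for $q\in(2,6]$. $\Lambda_k:=\{\mathbf{r}_k=(r_1,\dots,r_k):0=:r_0<r_1<\dots<r_k<r_{k+1}:=\infty\}$; for $\mathbf{r}_k\in\Lambda_k$, $B_i:=\{x\in\mathbb{R}^3:r_{i-1}<|x|<r_i\}$, $i=1,\dots,k+1$. $\mathcal{H}_i:=\{u\in H^1_0(B_i): u \text{ radial},\ u=0 \text{ outside } B_i\}$ with norm $\|u\|_i^2=\int_{B_i}(|\nabla u|^2+V(|x|)u^2)dx$, and $\mathbf{H}_k:=\mathcal{H}_1\times\dots\times\mathcal{H}_{k+1}$. For $b>0$, $E_b(u_1,\dots,u_{k+1}):=\frac12\sum_i\|u_i\|_i^2+\frac b4\big(\sum_i\int_{B_i}|\nabla u_i|^2dx\big)^2-\frac1p\sum_i\int_{B_i}|u_i|^pdx$ (so $E_b(u_1,\dots,u_{k+1})=I_b(\sum_i u_i)$). The set $N_k^-$ consists of all $(u_1,\dots,u_{k+1})\in\mathbf{H}_k$ such that for every $i$: $u_i\neq0$, $\|u_i\|_i^2+b\big(\int_{B_i}|\nabla u_i|^2\big)^2+b\int_{B_i}|\nabla u_i|^2\sum_{j\neq i}\int_{B_j}|\nabla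 u_j|^2=\int_{B_i}|u_i|^p$ (i.e. $\langle\partial_{u_i}E_b,u_i\rangle=0$), and $(4-p)\int_{B_i}|u_i|^pdx<2\|u_i\|_i^2$. *)

(* Defs.v *)
From HB Require Import structures.
From mathcomp Require Import all_boot all_order all_algebra.
From mathcomp Require Import all_classical all_reals all_analysis.
Import Order.TTheory GRing.Theory Num.Theory.
Import numFieldNormedType.Exports.
Local Open Scope classical_set_scope.
Local Open Scope ring_scope.



Unset Printing Implicit Defensive.

Section Defs.
Context {R : realType}.

Definition R3 := ((R * R) * R)%type.

Definition leb3 :=
  ((@lebesgue_measure R \x @lebesgue_measure R) \x @lebesgue_measure R)%E.

Definition nrm3 (x : R3) : R := Num.sqrt (x.1.1 ^+ 2 + x.1.2 ^+ 2 + x.2 ^+ 2).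

Definition e3 (j : 'I_3) : R3 :=
  ((if val j == 0%N then 1 else 0), (if val j == 1%N then 1 else 0),
   (if val j == 2%N then 1 else 0)).

Definition iterD (vs : seq R3) (f : R3 -> R) : R3 -> R :=
  foldr (fun v h => 'D_v h) f vs.

Definition test_fun (phi : R3 -> R) : Prop :=
  (forall (vs : seq R3) (x v : R3), derivable (iterD vs phi) x v) /\
  (forall vs : seq R3, continuous (iterD vs phi)) /\
  compact (closure [set x | phi x != 0]).

Definition integrable3 (f : R3 -> R) : Prop :=
  leb3.-integrable setT (fun x => (f x)%:E).

Definition weak_grad (u : R3 -> R) (g : 'I_3 -> R3 -> R) : Prop :=
  forall phi, test_fun phi -> forall j : 'I_3,
    (\int[leb3]_x (u x * 'D_(e3 j) phi x)%:E =
     - \int[leb3]_x (g j x * phi x)%:E)%E.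

Definition gradsq (g : 'I_3 -> R3 -> R) (x : R3) : R := \sum_(j < 3) g j x ^+ 2.

Definition H1 (u : R3 -> R) (g : 'I_3 -> R3 -> R) : Prop :=
  measurable_fun setT u /\ (forall j, measurable_fun setT (g j)) /\
  integrable3 (fun x => u x ^+ 2) /\ (forall j, integrable3 (fun x => g j x ^+ 2)) /\
  weak_grad u g.

Definition radial (f : R3 -> R) : Prop :=
  forall x y, nrm3 x = nrm3 y -> f x = f y.

Definition condV (V : R3 -> R) : Prop :=
  continuous V /\ radial V /\ exists V0, 0 < V0 /\ forall x, V0 <= V x.

(* u = 0 as an element of L^2 (a.e. zero) *)
Definition aezero (u : R3 -> R) : Prop := {ae leb3, forall x, u x = 0}.

Definition Hspace (V : R3 -> R) (u : R3 -> R) (g : 'I_3 -> R3 -> R) : Prop :=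
  H1 u g /\ radial u /\ integrable3 (fun x => V x * u x ^+ 2).

Definition Hnorm2 (V : R3 -> R) (u : R3 -> R) (g : 'I_3 -> R3 -> R) : R :=
  fine (\int[leb3]_x (gradsq g x + V x * u x ^+ 2)%:E).

(* int |u|^q dx, so that |u|_q^2 = (Lint q u)^(2/q) *)
Definition Lint (q : R) (u : R3 -> R) : R :=
  fine (\int[leb3]_x (`|u x| `^ q)%:E).

Definition Sq (V : R3 -> R) (q : R) : R :=
  inf [set s | exists (u : R3 -> R) (g : 'I_3 -> R3 -> R),
    [/\ Hspace V u g, integrable3 (fun x => `|u x| `^ q), ~ aezero u &
        s = Hnorm2 V u g / (Lint q u) `^ (2 / q)]].

(* radii: r_0 = 0, r_1, ..., r_k given by r 1, ..., r k *)
Definition rad (r : nat -> R) (i : nat) : R := if i is 0%N then 0 else r i.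

Definition Lambda (k : nat) (r : nat -> R) : Prop :=
  forall j : nat, (j < k)%N -> rad r j < r j.+1.

(* the shell B_{i+1} = { r_i < |x| < r_{i+1} } (0-based index i, r_{k+1} = oo) *)
Definition shell (k : nat) (r : nat -> R) (i : nat) : set R3 :=
  [set x | rad r i < nrm3 x /\ (i = k \/ nrm3 x < r i.+1)].

Definition Hi (V : R3 -> R) (k : nat) (r : nat -> R) (i : nat)
    (u : R3 -> R) (g : 'I_3 -> R3 -> R) : Prop :=
  Hspace V u g /\ (forall x, ~ shell k r i x -> u x = 0).

Definition normi2 (V : R3 -> R) (k : nat) (r : nat -> R) (i : nat)
    (u : R3 -> R) (g : 'I_3 -> R3 -> R) : R :=
  fine (\int[leb3]_(x in shell k r i) (gradsq g x + V x * u x ^+ 2)%:E).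

Definition gradi2 (k : nat) (r : nat -> R) (i : nat) (g : 'I_3 -> R3 -> R) : R :=
  fine (\int[leb3]_(x in shell k r i) (gradsq g x)%:E).

Definition Lpi (p : R) (k : nat) (r : nat -> R) (i : nat) (u : R3 -> R) : R :=
  fine (\int[leb3]_(x in shell k r i) (`|u x| `^ p)%:E).

Definition Nminus (V : R3 -> R) (k : nat) (r : nat -> R) (p b : R)
    (u : 'I_k.+1 -> R3 -> R) (g : 'I_k.+1 -> 'I_3 -> R3 -> R) : Prop :=
  (forall i : 'I_k.+1, Hi V k r i (u i) (g i)) /\
  forall i : 'I_k.+1,
    [/\ ~ aezero (u i),
        normi2 V k r i (u i) (g i) + b * (gradi2 k r i (g i)) ^+ 2
          + b * gradi2 k r i (g i) * (\sum_(j < k.+1 | j != i) gradi2 k r j (g j))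
          = Lpi p k r i (u i) &
        (4 - p) * Lpi p k r i (u i) < 2 * normi2 V k r i (u i) (g i)].

Definition bhat (p : R) (k : nat) (S : R) : R :=
  (p - 2) / (4 - p)
  * (1 + k%:R * 2 `^ (2 / (p - 2)) * (2 / (4 - p)) `^ (2 / (p - 2)))^-1
  * ((4 - p) / 2) `^ (2 / (p - 2)) * (2 * S) `^ (- (p / (p - 2))).

Definition bstar (p : R) (k : nat) (S : R) : R :=
  Num.min ((p - 2) / (4 - p) * ((4 - p) / 2) `^ (2 / (p - 2))
             * (2 * S) `^ (- (p / (p - 2))))
          (bhat p k S).

End Defs.

(* Main.v *)
Require Import Defs.
From HB Require Import structures.
From mathcomp Require Import all_boot all_order all_algebra.
From mathcomp Require Import all_classical all_reals all_analysis.
From mathcomp Require Import ring lra.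
Import Order.TTheory GRing.Theory Num.Theory.
Import numFieldNormedType.Exports.
Local Open Scope classical_set_scope.
Local Open Scope ring_scope.

Section Scale.
Local Open Scope ereal_scope.
Context d (T : measurableType d) (R : realType) (mu : {measure set T -> \bar R}).
Import HBNNSimple.

Lemma nnint_scale (f : T -> \bar R) (k : R) : (0 < k)%R ->
  ereal_sup [set sintegral mu (h : {nnsfun T >-> R}) | h in [set h : {nnsfun T >-> R} | forall x, (h x)%:E <= k%:E * f x]]
  = k%:E * ereal_sup [set sintegral mu (h : {nnsfun T >-> R}) | h in [set h : {nnsfun T >-> R} | forall x, (h x)%:E <= f x]].
Proof.
move=> k0; rewrite -ereal_sup_pZl //; congr ereal_sup; apply/seteqP; split.
- move=> _ [h hle <-].
  have ki : (0 <= k^-1)%R by rewrite invr_ge0 ltW.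
  exists (sintegral mu (scale_nnsfun h ki)).
    exists (scale_nnsfun h ki) => // x /=.
    rewrite EFinM -(@lee_pmul2l _ k%:E) ?lte_fin// muleA -EFinM mulfV ?gt_eqF//. idtac.
    rewrite mul1r; exact: hle.
  rewrite -(sintegralrM mu k); apply: eq_sintegral => x /=.
  by rewrite mulrA mulfV ?gt_eqF// mul1r.
- move=> _ [_ [h hle <-] <-].
  exists (scale_nnsfun h (ltW k0)).
    move=> x /=; rewrite EFinM lee_pmul2l ?lte_fin//; exact: hle.
  rewrite -(sintegralrM mu k); apply: eq_sintegral => x //.
Qed.


Lemma kpy (k : R) : (0 < k)%R -> k%:E * +oo = +oo.
Proof. by move=> k0; rewrite mulry gtr0_sg// mul1e. Qed.
Lemma kNy (k : R) : (0 < k)%R -> k%:E * -oo = -oo.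
Proof. by move=> k0; rewrite mulrNy gtr0_sg// mul1e. Qed.

Lemma muleB_pos (k : R) (x y : \bar R) : (0 < k)%R -> k%:E * (x - y) = k%:E * x - k%:E * y.
Proof.
move=> k0; case: x => [x| |]; case: y => [y| |] //=; rewrite ?kpy ?kNy //=.
by rewrite -EFinD -EFinM -EFinD mulrDr mulrN.
Qed.

Lemma int_scale (D : set T) (f : T -> \bar R) (k : R) : (0 < k)%R ->
  \int[mu]_(x in D) (k%:E * f x) = k%:E * \int[mu]_(x in D) f x.
Proof.
move=> k0; rewrite /integral /= erestrict_scale ge0_funeposM ?ltW// ge0_funenegM ?ltW//.
by rewrite !nnint_scale// muleB_pos.
Qed.

Lemma le_int_gen (D : set T) (f g : T -> \bar R) :
  (forall x, D x -> 0 <= f x <= g x) ->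
  \int[mu]_(x in D) f x <= \int[mu]_(x in D) g x.
Proof.
move=> fg; rewrite /integral /=.
have -> : (f \_ D)^\- = (g \_ D)^\-.
  apply/funext => x; rewrite !funenegE /patch; case: ifPn => // /set_mem Dx.
  have /andP[f0 fg0] := fg x Dx.
  by rewrite !max_r// leeNl oppe0 ?(le_trans f0 fg0).
apply: leeB => //; apply: ereal_sup_le => _ [h hle <-]; exists h => // x.
apply: (le_trans (hle x)); rewrite !funeposE /patch; case: ifPn => // /set_mem Dx.
have /andP[f0 fg0] := fg x Dx.
by rewrite !max_l ?(le_trans f0 fg0).
Qed.

End Scale.

Section DefsLemmas.
Context {R : realType}.
Local Notation R3 := (@R3 R).

Lemma fine_scale (k : R) (e : \bar R) : 0 < k -> fine (k%:E * e)%E = k * fine e.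
Proof.
move=> k0; case: e => [e| |] /=; rewrite ?kpy ?kNy ?mulr0 //.
Qed.

Lemma gradsq_scale (t : R) (g : 'I_3 -> R3 -> R) x :
  gradsq (fun j x => t * g j x) x = t ^+ 2 * gradsq g x.
Proof. by rewrite /gradsq mulr_sumr; apply: eq_bigr => j _; rewrite exprMn. Qed.

Lemma normi2_scale V k r i (u : R3 -> R) g t : 0 < t ->
  normi2 V k r i (fun x => t * u x) (fun j x => t * g j x) = t ^+ 2 * normi2 V k r i u g.
Proof.
move=> t0; rewrite /normi2.
under eq_integral => x _ do rewrite gradsq_scale exprMn mulrCA -mulrDr EFinM.
by rewrite int_scale ?exprn_gt0 // fine_scale ?exprn_gt0.
Qed.

Lemma gradi2_scale k r i (g : 'I_3 -> R3 -> R) t : 0 < t ->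
  gradi2 k r i (fun j x => t * g j x) = t ^+ 2 * gradi2 k r i g.
Proof.
move=> t0; rewrite /gradi2.
under eq_integral => x _ do rewrite gradsq_scale EFinM.
by rewrite int_scale ?exprn_gt0 // fine_scale ?exprn_gt0.
Qed.

Lemma Lpi_scale p k r i (u : R3 -> R) t : 0 < t ->
  Lpi p k r i (fun x => t * u x) = t `^ p * Lpi p k r i u.
Proof.
move=> t0; rewrite /Lpi.
have E x : (`|t * u x| `^ p)%:E = ((t `^ p)%:E * (`|u x| `^ p)%:E)%E.
  by rewrite normrM (gtr0_norm t0) powRM ?EFinM //; exact: ltW.
under eq_integral => x _ do rewrite E.
by rewrite int_scale ?powR_gt0 // fine_scale ?powR_gt0.
Qed.

Lemma int3_scale (f : R3 -> R) c : integrable3 f -> integrable3 (fun x => c * f x).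
Proof.
move=> h; rewrite /integrable3.
under eq_fun do rewrite EFinM.
exact: integrableZl.
Qed.

Lemma Hi_scale V k r i (u : R3 -> R) g t : 0 < t -> Hi V k r i u g ->
  Hi V k r i (fun x => t * u x) (fun j x => t * g j x).
Proof.
move=> t0 [[[mu [mg [iu [ig wg]]]] [ru iV]] supp]; split; last first.
  by move=> x /supp ->; rewrite mulr0.
split; last split.
- split; first exact: (measurable_realfun.measurable_funM (measurable_cst t) mu).
  split; first by move=> j; exact: (measurable_realfun.measurable_funM (measurable_cst t) (mg j)).
  split.
    have -> : (fun x => (t * u x) ^+ 2) = (fun x => t ^+ 2 * u x ^+ 2).
      by apply/funext => x; rewrite exprMn.
    exact: int3_scale.
  split.
    move=> j; have -> : (fun x => (t * g j x) ^+ 2) = (fun x => t ^+ 2 * g j x ^+ 2).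
      by apply/funext => x; rewrite exprMn.
    exact: int3_scale.
  move=> phi tphi j.
  have E1 x : ((t * u x * 'D_(e3 j) phi x)%:E = t%:E * (u x * 'D_(e3 j) phi x)%:E)%E.
    by rewrite -mulrA EFinM.
  have E2 x : ((t * g j x * phi x)%:E = t%:E * (g j x * phi x)%:E)%E.
    by rewrite -mulrA EFinM.
  under eq_integral => x _ do rewrite E1.
  under [X in _ = (- X)%E]eq_integral => x _ do rewrite E2.
  by rewrite !int_scale// wg// muleN.
- by move=> x y /ru ->.
- have -> : (fun x => V x * (t * u x) ^+ 2) = (fun x => t ^+ 2 * (V x * u x ^+ 2)).
    by apply/funext => x; rewrite exprMn mulrCA.
  exact: int3_scale.
Qed.

Lemma aezero_scale (u : R3 -> R) t : t != 0 -> ~ aezero u -> ~ aezero (fun x => t * u x).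
Proof.
move=> t0 nu hu; apply: nu; move: hu; rewrite /aezero.
case=> N [mN N0 sub]; exists N; split => // x /= nx; apply: sub => /= tx; apply: nx.
by move: tx => /eqP; rewrite mulf_eq0 (negbTE t0) /= => /eqP.
Qed.

Lemma gradsq_ge0 (g : 'I_3 -> R3 -> R) x : 0 <= gradsq g x.
Proof. by rewrite /gradsq; apply: sumr_ge0 => j _; exact: sqr_ge0. Qed.

Lemma normi2_ge0 V k r i (u : R3 -> R) g : (forall x, 0 <= V x) -> 0 <= normi2 V k r i u g.
Proof.
move=> V0; apply: fine_ge0; apply: integral_ge0 => x _.
by rewrite lee_fin addr_ge0 ?gradsq_ge0 // mulr_ge0 // sqr_ge0.
Qed.

Lemma gradi2_ge0 k r i (g : 'I_3 -> R3 -> R) : 0 <= gradi2 k r i g.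
Proof. by apply: fine_ge0; apply: integral_ge0 => x _; rewrite lee_fin gradsq_ge0. Qed.

Lemma Lpi_ge0 p k r i (u : R3 -> R) : 0 <= Lpi p k r i u.
Proof. by apply: fine_ge0; apply: integral_ge0 => x _; rewrite lee_fin powR_ge0. Qed.

Lemma fine_le_pos (x y : \bar R) : (0 <= x)%E -> (x <= y)%E -> 0 < fine y -> fine x <= fine y.
Proof.
case: y => [y| |] /=; rewrite ?ltxx //; case: x => [x| |] //=.
Qed.

Lemma gradi2_le V k r i (u : R3 -> R) g : (forall x, 0 <= V x) ->
  0 < normi2 V k r i u g -> gradi2 k r i g <= normi2 V k r i u g.
Proof.
move=> V0 np; apply: fine_le_pos => //.
  by apply: integral_ge0 => x _; rewrite lee_fin gradsq_ge0.
apply: le_int_gen => x _; rewrite !lee_fin gradsq_ge0 /= lerDl.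
by rewrite mulr_ge0 // sqr_ge0.
Qed.

Lemma inf_ge0 (E : set R) : (forall s, E s -> 0 <= s) -> 0 <= inf E.
Proof.
move=> E0; have [[s Es]|nE] := pselect (exists s, E s); last first.
  have -> : E = set0 by apply/seteqP; split => // x Ex; apply: nE; exists x.
  by rewrite inf0.
by apply: lb_le_inf; [exists s | move=> y /E0].
Qed.

Lemma Sq_ge0 (V : R3 -> R) (q : R) : (forall x, 0 <= V x) -> 0 <= Sq V q.
Proof.
move=> V0; rewrite /Sq; apply: inf_ge0 => s [u [g [_ _ _ ->]]].
apply: divr_ge0; last exact: powR_ge0.
apply: fine_ge0; apply: integral_ge0 => x _.
by rewrite lee_fin addr_ge0 ?gradsq_ge0 // mulr_ge0 // sqr_ge0.
Qed.

End DefsLemmas.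

Section Core.
Context {R : realType}.

Lemma powR2 (x : R) : 0 <= x -> x `^ 2 = x ^+ 2.
Proof. move=> x0; exact: (powR_mulrn 2 x0). Qed.

Lemma tangent (y1 y2 m : R) : 0 < y1 -> y1 <= y2 -> 1 <= m ->
  y2 `^ m - y1 `^ m <= m * y2 `^ (m - 1) * (y2 - y1).
Proof.
move=> y10 y12 m1.
have [->|y12'] := eqVneq y1 y2; first by rewrite !subrr mulr0.
have lt12 : y1 < y2 by rewrite lt_neqAle y12' y12.
have der (x : R) : 0 < x -> is_derive x 1 (fun y : R => y `^ m) (m * x `^ (m - 1)).
  by move=> x0; exact: is_derive1_powR.
have [] := @MVT _ (fun y : R => y `^ m) (fun x => m * x `^ (m - 1)) y1 y2 lt12.
- move=> x; rewrite in_itv /= => /andP[x1 _]; apply: der; exact: lt_trans x1.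
- apply: derivable_within_continuous => x; rewrite in_itv /= => /andP[x1 _].
  by apply: (@ex_derive _ _ _ _ _ _ _ (der x (lt_le_trans y10 x1))).
move=> c; rewrite in_itv /= => /andP[c1 c2] ->.
rewrite ler_pM2r ?subr_gt0 // ler_pM2l ?(lt_le_trans ltr01 m1) //.
apply: ge0_ler_powR; rewrite ?subr_ge0 // ?nnegrE; try exact: ltW.
  exact: (ltW (lt_trans y10 c1)).
exact: (ltW (lt_le_trans y10 y12)).
Qed.
Lemma cont_G n (a c d : 'I_n -> R) (b m Xs : R) :
  (forall j, 0 < a j) -> (forall j, 0 <= c j) -> (forall j, 0 < d j) -> 0 <= b ->
  {within `[0, Xs], continuous (fun X => \sum_j c j * ((a j + b * c j * X) / d j) `^ m - X)}.
Proof.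
move=> a0 c0 d0 b0.
pose aff (j : 'I_n) : R -> R := cst (a j / d j) + (b * c j / d j) \*: id.
pose h (j : 'I_n) : R -> R := c j \*: ((fun y : R => y `^ m) \o aff j).
have -> : (fun X => \sum_j c j * ((a j + b * c j * X) / d j) `^ m - X) = (\sum_j h j) - id.
  apply/funext => X; rewrite fct_sumE /= /h /aff /=; congr (_ - _); apply: eq_bigr => j _.
  congr (_ * _ `^ _); rewrite /GRing.scale /=. change ((a j + b * c j * X) / d j = a j / d j + (b * c j / d j) * X); field; exact: lt0r_neq0.
apply: (@derivable_within_continuous _ _ _ `[0, Xs]) => x; rewrite in_itv /= => /andP[x0 _].
have affp j : 0 < aff j x.
  rewrite /aff /= /GRing.scale /= ltr_pwDl ?divr_gt0 //.
  by rewrite mulr_ge0 // divr_ge0 // ?mulr_ge0 // ltW.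
apply: ex_derive; apply: is_deriveB.
apply: is_derive_sum => j; apply: is_deriveZ.
apply: is_derive1_comp.
exact: is_derive1_powR.
Qed.

Lemma core n (a c d : 'I_n -> R) (p b P : R) :
  2 < p < 4 -> 0 < b -> 0 < P ->
  (forall i, 0 < a i) -> (forall i, 0 <= c i <= a i) -> (forall i, 0 < d i) ->
  (forall i, a i * (a i / d i) `^ (2 / (p - 2)) <= P) ->
  b * n%:R * ((2 / (4 - p)) `^ (2 / (p - 2)) * P) < (p - 2) / (4 - p) ->
  exists! t : 'I_n -> R, (forall i, 0 < t i) /\ forall i,
    t i ^+ 2 * a i + b * (t i ^+ 2 * c i) * (\sum_j t j ^+ 2 * c j) = t i `^ p * d i /\
    (4 - p) * (t i `^ p * d i) < 2 * (t i ^+ 2 * a i).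
Proof.
move=> /andP[p2 p4] b0 P0 a0 ca d0 aP key.
set m := 2 / (p - 2).
set Q := (2 / (4 - p)) `^ m.
have p2' : 0 < p - 2 by rewrite subr_gt0.
have p4' : 0 < 4 - p by rewrite subr_gt0.
have m1 : 1 <= m by rewrite /m ler_pdivlMr // mul1r; lra.
have m0 : 0 < m by lra.
have c0 j : 0 <= c j by case/andP: (ca j).
have cle j : c j <= a j by case/andP: (ca j).
pose Y j := 2 * a j / ((4 - p) * d j).
pose y j X := (a j + b * c j * X) / d j.
have Y0 j : 0 < Y j by rewrite /Y divr_gt0 ?mulr_gt0.
have ypos j X : 0 <= X -> 0 < y j X.
  move=> X0; rewrite /y divr_gt0 //; apply: (lt_le_trans (a0 j)); rewrite lerDl; apply: mulr_ge0 => //; apply: mulr_ge0 => //; exact: ltW.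
have A0 j : a j * Y j `^ m <= Q * P.
  have -> : Y j = 2 / (4 - p) * (a j / d j).
    rewrite /Y; field; apply/andP; split; apply: lt0r_neq0 => //.
  rewrite powRM ?divr_ge0 ?(ltW (a0 j)) ?(ltW (d0 j)) ?(ltW p4') //.
  by rewrite mulrCA ler_pM2l ?powR_gt0 ?divr_gt0.
have A j z : 0 < z -> z <= Y j -> c j * z `^ m <= Q * P.
  move=> z0 zY; apply: le_trans (A0 j); apply: ler_pM => //; try exact: powR_ge0.
  by apply: ge0_ler_powR; rewrite ?nnegrE; [exact: ltW | exact: ltW | exact: ltW (Y0 j) | exact: zY].
have B j z : 0 < z -> z <= Y j -> c j ^+ 2 * z `^ (m - 1) / d j <= (4 - p) / 2 * (Q * P).
  move=> z0 zY.
  have YmY : Y j `^ m = Y j `^ (m - 1) * Y j.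
    rewrite -{1}(subrK 1 m) powRD ?powRr1 ?(ltW (Y0 j)) //.
    by apply/implyP => _; exact: lt0r_neq0 (Y0 j).
  apply: (@le_trans _ _ (a j ^+ 2 * Y j `^ (m - 1) / d j)).
    rewrite ler_pM2r ?invr_gt0 //; apply: ler_pM; [exact: sqr_ge0|exact: powR_ge0| |].
      by rewrite !expr2; apply: ler_pM.
    by apply: ge0_ler_powR; rewrite ?nnegrE ?subr_ge0; [|exact: ltW | exact: ltW (Y0 j) | exact: zY].
  have -> : a j ^+ 2 * Y j `^ (m - 1) / d j = (4 - p) / 2 * (a j * Y j `^ m).
    rewrite YmY; set W := Y j `^ (m - 1); rewrite /Y; field.
    by apply/andP; split; apply: lt0r_neq0.
  by rewrite ler_pM2l ?divr_gt0 //; exact: A0.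
have pm : (p - 2) * m = 2 by rewrite /m; field; exact: lt0r_neq0.
have charac (t : 'I_n -> R) X : (forall i, 0 < t i) ->
    (forall i, t i ^+ 2 * a i + b * (t i ^+ 2 * c i) * X = t i `^ p * d i /\
      (4 - p) * (t i `^ p * d i) < 2 * (t i ^+ 2 * a i)) ->
    X = \sum_j t j ^+ 2 * c j ->
  [/\ 0 <= X, forall i, t i ^+ 2 = (y i X) `^ m, forall i, y i X <= Y i &
      \sum_j c j * (y j X) `^ m = X].
  move=> tpos sol Xdef.
  have tp i : t i `^ p = t i ^+ 2 * t i `^ (p - 2).
    have -> : t i `^ p = t i `^ ((p - 2) + 2) by rewrite subrK.
    rewrite powRD; last by apply/implyP => _; exact: lt0r_neq0.
    by rewrite powR2 ?(ltW (tpos i)) // mulrC.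
  have yeq i : y i X = t i `^ (p - 2).
    have [e _] := sol i.
    have e' : a i + b * c i * X = t i `^ (p - 2) * d i.
      apply: (@mulfI _ (t i ^+ 2)); first by rewrite expf_neq0 // lt0r_neq0.
      by rewrite mulrA -tp -e; ring.
    by rewrite /y e' mulfK // lt0r_neq0.
  have tsq i : t i ^+ 2 = (y i X) `^ m.
    by rewrite yeq -powRrM pm powR2 // ltW.
  split.
  - by rewrite Xdef; apply: sumr_ge0 => j _; rewrite mulr_ge0 // sqr_ge0.
  - exact: tsq.
  - move=> i; have [_ ineq] := sol i.
    have h1 : (4 - p) * (t i `^ (p - 2) * d i) < 2 * a i.
      rewrite -(ltr_pM2l (exprn_gt0 2 (tpos i))).
      have -> : t i ^+ 2 * ((4 - p) * (t i `^ (p - 2) * d i)) = (4 - p) * (t i `^ p * d i).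
        by rewrite tp; ring.
      by apply: (lt_le_trans ineq); rewrite mulrCA.
    rewrite yeq /Y ler_pdivlMr ?mulr_gt0 //; apply: ltW; apply: (le_lt_trans _ h1).
    by rewrite mulrCA.
  - by rewrite [in RHS]Xdef; apply: eq_bigr => j _; rewrite -tsq mulrC.
have yd j X : y j X * d j = a j + b * c j * X by rewrite /y divfK // lt0r_neq0.
have contr X1 X2 : 0 <= X1 -> X1 <= X2 -> (forall j, y j X2 <= Y j) ->
    \sum_j c j * (y j X1) `^ m = X1 -> \sum_j c j * (y j X2) `^ m = X2 -> X1 = X2.
  move=> X10 X12 yY F1 F2; apply/eqP; rewrite eq_le X12 /= leNgt; apply/negP => lt12.
  have y12 j : y j X1 <= y j X2.
    rewrite /y ler_pM2r ?invr_gt0 // lerD2l ler_wpM2l ?(ltW lt12) //.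
    by rewrite mulr_ge0 // ltW.
  have dy j : y j X2 - y j X1 = b * c j * (X2 - X1) / d j.
    by rewrite /y; field; exact: lt0r_neq0.
  have : X2 - X1 <= n%:R * (m * b * ((4 - p) / 2 * (Q * P))) * (X2 - X1).
    rewrite -[in X in X <= _]F1 -[in X in X <= _]F2 -sumrB.
    have -> : n%:R * (m * b * ((4 - p) / 2 * (Q * P))) * (X2 - X1) =
        \sum_(j < n) (m * b * (X2 - X1) * ((4 - p) / 2 * (Q * P))).
      by rewrite sumr_const card_ord -mulr_natl; ring.
    apply: ler_sum => j _; rewrite -mulrBr.
    apply: (@le_trans _ _ (c j * (m * (y j X2) `^ (m - 1) * (y j X2 - y j X1)))).
      by rewrite ler_wpM2l //; apply: tangent => //; apply: ypos.
    rewrite dy.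
    have -> : c j * (m * y j X2 `^ (m - 1) * (b * c j * (X2 - X1) / d j)) =
        m * b * (X2 - X1) * (c j ^+ 2 * y j X2 `^ (m - 1) / d j) by ring.
    apply: ler_wpM2l.
      apply: mulr_ge0; first exact: (mulr_ge0 (ltW m0) (ltW b0)).
      by rewrite subr_ge0 ltW.
    apply: B; first by apply: ypos; exact: le_trans X12.
    exact: yY.
  rewrite -{1}[X2 - X1]mul1r ler_pM2r ?subr_gt0 //.
  apply/negP; rewrite -ltNge.
  have -> : n%:R * (m * b * ((4 - p) / 2 * (Q * P))) = b * n%:R * (Q * P) * ((4 - p) / (p - 2)).
    by rewrite /m; field; exact: lt0r_neq0.
  rewrite -ltr_pdivlMr ?divr_gt0 // mul1r invf_div; exact: key.
set Xs := (p - 2) / ((4 - p) * b).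
have Xs0 : 0 < Xs by rewrite /Xs divr_gt0 // mulr_gt0.
have baXs j : b * a j * Xs = a j * ((p - 2) / (4 - p)).
  by rewrite /Xs; field; apply/andP; split; apply: lt0r_neq0.
pose G X := \sum_j c j * ((a j + b * c j * X) / d j) `^ m - X.
have G0 : 0 <= G 0.
  rewrite /G subr0; apply: sumr_ge0 => j _; apply: mulr_ge0 => //; exact: powR_ge0.
have GXs : G Xs < 0.
  rewrite /G subr_lt0.
  apply: (@le_lt_trans _ _ (n%:R * (Q * P))).
    have -> : n%:R * (Q * P) = \sum_(j < n) (Q * P) by rewrite sumr_const card_ord mulr_natl.
    apply: ler_sum => j _; apply: (A j (y j Xs)); first exact: ypos (ltW Xs0).
    have -> : Y j = (2 * a j / (4 - p)) / d j.
      by rewrite /Y; field; apply/andP; split; apply: lt0r_neq0.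
    rewrite /y ler_pM2r ?invr_gt0 //.
    apply: (@le_trans _ _ (a j + b * a j * Xs)).
      rewrite lerD2l ler_wpM2r ?(ltW Xs0) // ler_wpM2l //; exact: ltW.
    rewrite baXs -subr_ge0.
    have -> : 2 * a j / (4 - p) - (a j + a j * ((p - 2) / (4 - p))) = 0.
      by field; exact: lt0r_neq0.
    by [].
  have key' : n%:R * (Q * P) < (p - 2) / (4 - p) / b.
    rewrite ltr_pdivlMr //; apply: le_lt_trans key; rewrite le_eqVlt; apply/orP; left.
    by apply/eqP; rewrite /Q /m; ring.
  apply: (lt_le_trans key'); rewrite le_eqVlt; apply/orP; left; apply/eqP.
  by rewrite /Xs; field; apply/andP; split; apply: lt0r_neq0.
have [X0 X0in GX0] : exists2 X0, X0 \in `[0, Xs] & G X0 = 0.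
  apply: IVT; first exact: ltW.
    by rewrite /G; apply: cont_G => //; exact: ltW.
  by rewrite ge_min le_max G0 (ltW GXs) orbT.
move: X0in; rewrite in_itv /= => /andP[X00 X0s].
have X0lt : X0 < Xs.
  rewrite lt_neqAle X0s andbT; apply/negP => /eqP eX.
  by move: GXs; rewrite -eX GX0 ltxx.
have FX0 : \sum_j c j * (y j X0) `^ m = X0.
  by apply/eqP; rewrite -subr_eq0; apply/eqP; exact: GX0.
pose t i := (y i X0) `^ (p - 2)^-1.
have tpos i : 0 < t i by apply: powR_gt0; exact: ypos.
have tsq i : t i ^+ 2 = (y i X0) `^ m.
  by rewrite -powR2 ?(ltW (tpos i)) // -powRrM /m mulrC.
have tp i : t i `^ p = (y i X0) `^ m * y i X0.
  rewrite -powRrM.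
  have -> : (p - 2)^-1 * p = m + 1 by rewrite /m; field; exact: lt0r_neq0.
  rewrite powRD ?powRr1 ?(ltW (ypos i X0 X00)) //.
  by apply/implyP => _; exact: lt0r_neq0 (ypos i X0 X00).
have tsum : \sum_j t j ^+ 2 * c j = X0.
  by rewrite -[RHS]FX0; apply: eq_bigr => j _; rewrite tsq mulrC.
have tsol i : t i ^+ 2 * a i + b * (t i ^+ 2 * c i) * (\sum_j t j ^+ 2 * c j) = t i `^ p * d i /\
    (4 - p) * (t i `^ p * d i) < 2 * (t i ^+ 2 * a i).
  have e : y i X0 `^ m * y i X0 * d i = y i X0 `^ m * (a i + b * c i * X0) by rewrite -mulrA yd.
  rewrite tsum tp tsq e; split; first by ring.
  have W0 : 0 < (y i X0) `^ m by apply: powR_gt0; exact: ypos.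
  rewrite mulrCA [X in _ < X]mulrCA ltr_pM2l //.
  have h4 : (4 - p) * b * (c i * X0) < (p - 2) * a i.
    apply: (@le_lt_trans _ _ ((4 - p) * b * (a i * X0))).
      by rewrite ler_wpM2l ?mulr_ge0 ?(ltW p4') ?(ltW b0) // ler_wpM2r.
    apply: (@lt_le_trans _ _ ((4 - p) * b * (a i * Xs))).
      by rewrite ltr_pM2l ?mulr_gt0 // ltr_pM2l.
    rewrite le_eqVlt; apply/orP; left; apply/eqP.
    by rewrite /Xs; field; apply/andP; split; apply: lt0r_neq0.
  lra.
exists t; split; first by split.
move=> t' [t'pos t'sol].
pose X' := \sum_j t' j ^+ 2 * c j.
have [X'0 t'sq t'Y F'] := charac t' X' t'pos (fun i => t'sol i) erefl.
have := charac t (\sum_j t j ^+ 2 * c j) tpos tsol erefl; rewrite tsum => -[_ _ tY _].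
have eX : X0 = X'.
  have [le1|le2] := leP X0 X'.
    exact: contr.
  by apply/esym; apply: contr => //; exact: ltW.
apply/funext => i; apply/eqP; rewrite -(@eqrXn2 _ 2) ?(ltW (tpos i)) ?(ltW (t'pos i)) //.
by rewrite tsq t'sq eX.
Qed.




End Core.


Lemma aP_lemma {R : realType} (a d S p : R) : 2 < p -> 0 < a -> 0 < d -> 0 < S ->
  a <= d `^ (2 / p) * (2 * S) -> a * (a / d) `^ (2 / (p - 2)) <= (2 * S) `^ (2 / (p - 2) + 1).
Proof.
move=> p2 a0 d0 S0 aA.
have p0 : 0 < p by lra.
have p2' : 0 < p - 2 by rewrite subr_gt0.
set m := 2 / (p - 2).
have m0 : 0 <= m by rewrite /m divr_ge0 // ltW.
set A := d `^ (2 / p) * (2 * S).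
have A0 : 0 < A by rewrite /A mulr_gt0 ?powR_gt0 ?mulr_gt0.
apply: (@le_trans _ _ (A * (A / d) `^ m)).
  apply: ler_pM => //; [exact: ltW | exact: powR_ge0 |].
  apply: ge0_ler_powR => //; rewrite ?nnegrE.
  - by apply: divr_ge0; exact: ltW.
  - by apply: divr_ge0; exact: ltW.
  by rewrite ler_pM2r ?invr_gt0.
have e1 : A / d = (2 * S) * d `^ (2 / p - 1).
  rewrite /A powRB ?powRr1 ?ltW //; last by apply/implyP => _; exact: lt0r_neq0.
  by ring.
have h2S : 0 <= 2 * S by apply: mulr_ge0 => //; exact: ltW.
rewrite e1 powRM ?powR_ge0 // -powRrM /A.
have -> : d `^ (2 / p) * (2 * S) * ((2 * S) `^ m * d `^ ((2 / p - 1) * m)) =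
   (d `^ (2 / p) * d `^ ((2 / p - 1) * m)) * ((2 * S) `^ m * (2 * S)) by ring.
rewrite -powRD; last by apply/implyP => _; exact: lt0r_neq0.
have -> : 2 / p + (2 / p - 1) * m = 0.
  rewrite /m; field; apply/andP; split; apply: lt0r_neq0 => //.
rewrite powRr0 mul1r -{2}(@powRr1 _ (2 * S)); last by apply: mulr_ge0 => //; exact: ltW.
rewrite -powRD //.
by apply/implyP => _; apply: lt0r_neq0; rewrite mulr_gt0.
Qed.

Lemma powRV {R : realType} (x m : R) : 0 < x -> (x^-1) `^ m = (x `^ m)^-1.
Proof.
move=> x0.
have h : (x^-1) `^ m * x `^ m = 1.
  by rewrite -powRM ?invr_ge0 ?ltW // mulVf ?gt_eqF // powR1.
have xm : x `^ m != 0 by rewrite gt_eqF // powR_gt0.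
by rewrite -[(x^-1) `^ m]mulr1 -(mulfV xm) mulrA h mul1r.
Qed.

Theorem lemma2p1 (R : realType) (V : @R3 R -> R) (p : R) (k : nat)
    (r : nat -> R) (u : 'I_k.+1 -> @R3 R -> R)
    (g : 'I_k.+1 -> 'I_3 -> @R3 R -> R) :
  2 < p < 4 ->
  condV V ->
  Lambda k r ->
  (forall i : 'I_k.+1, Hi V k r i (u i) (g i)) ->
  (forall i : 'I_k.+1, ~ aezero (u i)) ->
  (forall i : 'I_k.+1, integrable3 (fun x => `|u i x| `^ p)) ->
  (forall i : 'I_k.+1,
      (2 * Sq V p)^-1 <= (Lpi p k r i (u i)) `^ (2 / p) / normi2 V k r i (u i) (g i)) ->
  forall b : R, 0 < b < bstar p k (Sq V p) ->
  exists! t : 'I_k.+1 -> R,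
    (forall i, 0 < t i) /\
    Nminus V k r p b (fun i x => t i * u i x) (fun i j x => t i * g i j x).
Proof.
move=> /andP[p2 p4] [_ [_ [V0 [V00 V0le]]]] _ hHi hnz _ hratio b /andP[b0 bst].
have Vge0 x : 0 <= V x by apply: le_trans (V0le x); exact: ltW.
have p2' : 0 < p - 2 by rewrite subr_gt0.
have p4' : 0 < 4 - p by rewrite subr_gt0.
have pp : 0 < p by lra.
set S := Sq V p.
set m := 2 / (p - 2).
have m0 : 0 < m by rewrite /m divr_gt0.
have S0 : 0 <= S by exact: Sq_ge0.
have bhat_le : bstar p k S <= bhat p k S by rewrite /bstar ge_min lexx orbT.
have Spos : 0 < S.
  rewrite lt_neqAle S0 andbT; apply/negP => /eqP S0'.
  have : bstar p k S <= 0.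
    rewrite /bstar ge_min; apply/orP; left.
    rewrite -S0' mulr0 /powR eqxx.
    have -> : (- (p / (p - 2)) == 0) = false.
      by apply/negbTE; rewrite oppr_eq0; apply: lt0r_neq0; rewrite divr_gt0.
    by rewrite mulr0.
  by move=> h; move: (lt_le_trans (lt_trans b0 bst) h); rewrite ltxx.
pose a (i : 'I_k.+1) := normi2 V k r i (u i) (g i).
pose c (i : 'I_k.+1) := gradi2 k r i (g i).
pose d (i : 'I_k.+1) := Lpi p k r i (u i).
have S2 : 0 < (2 * S)^-1 by rewrite invr_gt0 mulr_gt0.
have apos i : 0 < a i.
  rewrite lt_neqAle normi2_ge0 // andbT; apply/negP => /eqP a0.
  have := hratio i; rewrite -/(a i) -a0 invr0 mulr0 => h.
  by move: (lt_le_trans S2 h); rewrite ltxx.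
have dpos i : 0 < d i.
  rewrite lt_neqAle Lpi_ge0 andbT; apply/negP => /eqP d0.
  have := hratio i; rewrite -/(d i) -d0 powR0 ?mul0r => [h|].
    by move: (lt_le_trans S2 h); rewrite ltxx.
  by apply: lt0r_neq0; rewrite divr_gt0.
have ca i : 0 <= c i <= a i.
  by rewrite gradi2_ge0 /=; apply: gradi2_le => //; exact: apos.
have aP i : a i * (a i / d i) `^ m <= (2 * S) `^ (m + 1).
  apply: aP_lemma => //.
  have h := hratio i; rewrite -/(a i) -/(d i) ler_pdivlMr ?apos // in h.
  have S2' : 0 < 2 * S by rewrite mulr_gt0.
  rewrite -(ler_pM2l S2') mulrA mulfV ?gt_eqF // mul1r in h.
  by rewrite mulrC.
set Q := (2 / (4 - p)) `^ m.
set T := 2 `^ m.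
set P := (2 * S) `^ (m + 1).
have Q1 : 1 <= Q.
  have h2 : 1 <= 2 / (4 - p) by rewrite ler_pdivlMr // mul1r; lra.
  by have := ler_powR h2 (ltW m0); rewrite powRr0.
have T1 : 1 <= T.
  have h2 : (1 : R) <= 2 by lra.
  by have := ler_powR h2 (ltW m0); rewrite powRr0.
have P0 : 0 < P by rewrite /P powR_gt0 // mulr_gt0.
have Q0 : 0 < Q by apply: lt_le_trans Q1.
set D := 1 + k%:R * T * Q.
have D0 : 0 < D.
  rewrite /D ltr_pwDl //; apply: mulr_ge0; [apply: mulr_ge0 => //; exact: le_trans T1 | exact: le_trans Q1].
have bhatE : bhat p k S = (p - 2) / (4 - p) / (D * Q * P).
  rewrite /bhat -/m -[(4 - p) / 2]invf_div powRV ?divr_gt0 // powRN.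
  have -> : p / (p - 2) = m + 1 by rewrite /m; field; exact: lt0r_neq0.
  rewrite -/P -/T -/Q -/D !invfM; ring.
have hb : b * (D * Q * P) < (p - 2) / (4 - p).
  by rewrite -ltr_pdivlMr ?mulr_gt0 // -bhatE; apply: lt_le_trans bst bhat_le.
have key : b * k.+1%:R * (Q * P) < (p - 2) / (4 - p).
  apply: le_lt_trans hb.
  have -> : b * k.+1%:R * (Q * P) = b * (Q * P) * k.+1%:R by ring.
  have -> : b * (D * Q * P) = b * (Q * P) * D by ring.
  rewrite ler_wpM2l ?mulr_ge0 ?(ltW b0) ?(ltW Q0) ?(ltW P0) //.
  rewrite /D -addn1 natrD addrC lerD2l -mulrA ler_peMr //.
  by rewrite mulr_ege1.
have [t [[tpos tsol] tuniq]] := core k.+1 a c d p b P (introT andP (conj p2 p4)) b0 P0 apos ca dpos aP key.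
have conv (t' : 'I_k.+1 -> R) (i : 'I_k.+1) : (forall j, 0 < t' j) ->
  [/\ normi2 V k r i (fun x => t' i * u i x) (fun j x => t' i * g i j x) = t' i ^+ 2 * a i,
      gradi2 k r i (fun j x => t' i * g i j x) = t' i ^+ 2 * c i,
      Lpi p k r i (fun x => t' i * u i x) = t' i `^ p * d i &
      \sum_(j < k.+1 | j != i) gradi2 k r j (fun j0 x => t' j * g j j0 x) =
      \sum_(j < k.+1 | j != i) t' j ^+ 2 * c j].
  move=> t'pos; split.
  - exact: normi2_scale.
  - exact: gradi2_scale.
  - exact: Lpi_scale.
  - by apply: eq_bigr => j _; exact: gradi2_scale.
exists t; split.
  split => //; split; first by move=> i; apply: Hi_scale; [exact: tpos | exact: hHi].
  move=> i; split; first by apply: aezero_scale; [exact: lt0r_neq0 | exact: hnz].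
  - have [-> -> -> ->] := conv t i tpos.
    have [e _] := tsol i; rewrite (bigD1 i) //= in e; rewrite -e; ring.
  - have [-> _ -> _] := conv t i tpos.
    by have [_ ineq] := tsol i.
move=> t' [t'pos [_ t'N]]; apply: tuniq; split => // i.
have [_ e ineq] := t'N i.
have [E1 E2 E3 E4] := conv t' i t'pos.
rewrite E1 E2 E3 E4 in e; rewrite E1 E3 in ineq; split => //.
by rewrite (bigD1 i) //= -e; ring.
Qed.
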